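(* Let $X$ be a topological space, $\Gamma$ a family of curves in $X$, $(\mathcal S_n)$ a sequence of finite covers of $X$, and $q>p\ge1$. Suppose there is a sequence $\eta_n>0$ tending to $0$ with $\sup_{s\in\mathcal S_n}\mathrm{mod}_q(\Gamma(s),\mathcal S_n)\le\eta_n$ for all $n$. Then $$\lim_{n\to\infty}\frac{\mathrm{mod}_q(\Gamma,\mathcal S_n)}{\mathrm{mod}_p(\Gamma,\mathcal S_n)}=0.$$
   Context: Combinatorial modulus: for a cover $\mathcal S$ and $p\ge1$, admissible metrics are $\rho:\mathcal S\to[0,\infty)$ with $0<\sum_s\rho(s)^p<\infty$; $\ell_\rho(K)=\sum_{s\in\mathcal S,\ s\cap K\ne\emptyset}\rho(s)$; $V_p(\rho)=\sum_s\rho(s)^p$; $L_\rho(\Gamma,\mathcal S)=\inf_{\gamma\in\Gamma}\ell_\rho(\gamma)$; $\mathrm{mod}_p(\Gamma,\mathcal S)=\inf_\rho V_p(\rho)/L_\rho(\Gamma,\mathcal S)^p$. $\Gamma(s)$ is the set of curves of $\Gamma$ meeting $s$. *)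

(* Defs.v *)
From Stdlib Require Import Reals List Classical ClassicalEpsilon.
Open Scope R_scope.

Record topology (X : Type) := {
  is_open : (X -> Prop) -> Prop;
  open_empty : is_open (fun _ => False);
  open_full : is_open (fun _ => True);
  open_inter : forall U V, is_open U -> is_open V -> is_open (fun x => U x /\ V x);
  open_union : forall F : (X -> Prop) -> Prop,
      (forall U, F U -> is_open U) -> is_open (fun x => exists U, F U /\ U x)
}.
Arguments is_open {X} _ _.

(* A curve in X: a continuous map [0,1] -> X (represented by a map R -> X
   whose restriction to [0,1] is continuous; values outside [0,1] are ignored). *)
Definition is_curve {X : Type} (T : topology X) (g : R -> X) : Prop :=
  forall U, is_open T U -> forall t, 0 <= t <= 1 -> U (g t) ->
    exists d, 0 < d /\ forall t', 0 <= t' <= 1 -> Rabs (t' - t) < d -> U (g t').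

Definition meets {X : Type} (s : X -> Prop) (g : R -> X) : Prop :=
  exists t, 0 <= t <= 1 /\ s (g t).

Definition finite_cover {X : Type} (S : list (X -> Prop)) : Prop :=
  NoDup S /\ forall x : X, exists s, In s S /\ s x.

Definition rpow (x p : R) : R := if Rle_dec x 0 then 0 else Rpower x p.

(* Infimum of a set of reals (0 if it has no greatest lower bound). *)
Definition is_glb (E : R -> Prop) (m : R) : Prop :=
  (forall x, E x -> m <= x) /\ (forall b, (forall x, E x -> b <= x) -> b <= m).

Definition Rinf (E : R -> Prop) : R :=
  match excluded_middle_informative (exists m, is_glb E m) with
  | left H => proj1_sig (constructive_indefinite_description _ H)
  | right _ => 0
  end.

Definition ell {X : Type} (S : list (X -> Prop)) (rho : (X -> Prop) -> R)
  (g : R -> X) : R :=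
  fold_right (fun s acc =>
    (if excluded_middle_informative (meets s g) then rho s else 0) + acc) 0 S.

Definition Vp {X : Type} (p : R) (S : list (X -> Prop)) (rho : (X -> Prop) -> R) : R :=
  fold_right (fun s acc => rpow (rho s) p + acc) 0 S.

(* Admissible metrics: rho >= 0 on S, 0 < V_p(rho) (< oo automatically). *)
Definition admissible {X : Type} (p : R) (S : list (X -> Prop))
  (rho : (X -> Prop) -> R) : Prop :=
  (forall s, In s S -> 0 <= rho s) /\ 0 < Vp p S rho.

Definition Lrho {X : Type} (Gam : (R -> X) -> Prop) (S : list (X -> Prop))
  (rho : (X -> Prop) -> R) : R :=
  Rinf (fun v => exists g, Gam g /\ v = ell S rho g).

(* mod_p(Gamma, S) = inf_rho V_p(rho) / L_rho^p.  Metrics with L_rho = 0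
   contribute +oo and are omitted; for empty Gamma, L_rho = +oo and mod = 0. *)
Definition modulus {X : Type} (p : R) (Gam : (R -> X) -> Prop)
  (S : list (X -> Prop)) : R :=
  if excluded_middle_informative (exists g, Gam g) then
    Rinf (fun v => exists rho, admissible p S rho /\ 0 < Lrho Gam S rho /\
                     v = Vp p S rho / rpow (Lrho Gam S rho) p)
  else 0.

Definition Gam_at {X : Type} (Gam : (R -> X) -> Prop) (s : X -> Prop) : (R -> X) -> Prop :=
  fun g => Gam g /\ meets s g.

(* Main.v *)
Require Import Defs.
From Stdlib Require Import Reals List Lra Classical ClassicalEpsilon.
Open Scope R_scope.

Lemma glb_exists (E : R -> Prop) : (exists x, E x) -> (exists b, forall x, E x -> b <= x) ->
  exists m, is_glb E m.
Proof.
  intros [x Hx] [b Hb].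
  destruct (completeness (fun y => E (- y))) as [m [Hm1 Hm2]].
  - exists (- b). intros y Hy. specialize (Hb _ Hy). lra.
  - exists (- x). rewrite Ropp_involutive. exact Hx.
  - exists (- m). split.
    + intros y Hy. assert (- y <= m) by (apply Hm1; rewrite Ropp_involutive; auto). lra.
    + intros c Hc. assert (m <= - c). { apply Hm2. intros y Hy. specialize (Hc _ Hy). lra. } lra.
Qed.

Lemma Rinf_glb (E : R -> Prop) : (exists x, E x) -> (exists b, forall x, E x -> b <= x) ->
  is_glb E (Rinf E).
Proof.
  intros H1 H2. unfold Rinf.
  destruct (excluded_middle_informative _) as [H|H].
  - destruct (constructive_indefinite_description _ H) as [m Hm]. exact Hm.
  - exfalso. apply H. apply glb_exists; auto.
Qed.

Lemma Rinf_le (E : R -> Prop) x b : E x -> (forall y, E y -> b <= y) -> Rinf E <= x.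
Proof. intros Hx Hb. apply (Rinf_glb E); eauto. Qed.

Lemma Rinf_ge (E : R -> Prop) x b : E x -> (forall y, E y -> b <= y) -> b <= Rinf E.
Proof. intros Hx Hb. apply (Rinf_glb E); eauto. Qed.

Lemma Rinf_lt (E : R -> Prop) x b c : E x -> (forall y, E y -> b <= y) -> Rinf E < c ->
  exists y, E y /\ y < c.
Proof.
  intros Hx Hb Hc. apply NNPP. intro Hn.
  assert (c <= Rinf E). { apply (Rinf_glb E); eauto. intros y Hy.
    destruct (Rlt_le_dec y c); auto. exfalso; eauto. }
  lra.
Qed.

Lemma rpow_nonneg x p : 0 <= rpow x p.
Proof. unfold rpow. destruct (Rle_dec x 0). lra. unfold Rpower. left; apply exp_pos. Qed.
Lemma rpow_0 p : rpow 0 p = 0.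
Proof. unfold rpow. destruct (Rle_dec 0 0); lra. Qed.
Lemma rpow_pos x p : 0 < x -> rpow x p = Rpower x p.
Proof. intros. unfold rpow. destruct (Rle_dec x 0); [lra|auto]. Qed.
Lemma rpow_pos' x p : 0 < x -> 0 < rpow x p.
Proof. intros. rewrite rpow_pos; auto. unfold Rpower; apply exp_pos. Qed.
Lemma rpow_one p : rpow 1 p = 1.
Proof. rewrite rpow_pos by lra. unfold Rpower. rewrite ln_1, Rmult_0_r. apply exp_0. Qed.
Lemma rpow_max u v q : 0 <= u -> 0 <= v -> rpow (Rmax u v) q <= rpow u q + rpow v q.
Proof. intros. unfold Rmax. destruct (Rle_dec u v);
  pose proof (rpow_nonneg u q); pose proof (rpow_nonneg v q); lra. Qed.
Lemma rpow_div r L p : 0 <= r -> 0 < L -> rpow (r / L) p = rpow r p / rpow L p.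
Proof.
  intros Hr HL. destruct (Req_dec r 0) as [->|Hr0].
  - unfold Rdiv. rewrite Rmult_0_l, rpow_0. lra.
  - assert (0 < r) by lra. assert (0 < r / L) by (apply Rdiv_lt_0_compat; auto).
    rewrite !rpow_pos by auto. unfold Rpower. unfold Rdiv. rewrite ln_mult by (auto; apply Rinv_0_lt_compat; auto).
    rewrite ln_Rinv by auto. rewrite Rmult_plus_distr_l, exp_plus.
    replace (p * - ln L) with (- (p * ln L)) by ring. rewrite exp_Ropp. reflexivity.
Qed.
Lemma rpow_ge1 L q : 1 <= L -> 0 < q -> 1 <= rpow L q.
Proof.
  intros. rewrite rpow_pos by lra. unfold Rpower.
  assert (0 <= q * ln L). { apply Rmult_le_pos; [lra|]. rewrite <- ln_1. destruct (Req_dec L 1) as [->|]; [lra|]. left; apply ln_increasing; lra. }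
  pose proof (exp_ineq1_le (q * ln L)). lra.
Qed.
Lemma rpow_mono r t a : 0 <= r <= t -> 0 < t -> 0 <= a -> rpow r a <= Rpower t a.
Proof.
  intros. destruct (Req_dec r 0) as [->|]. rewrite rpow_0. left; unfold Rpower; apply exp_pos.
  rewrite rpow_pos by lra. apply Rle_Rpower_l; lra.
Qed.
Definition lsum {A : Type} (l : list A) (f : A -> R) : R :=
  fold_right (fun s acc => f s + acc) 0 l.

Lemma lsum_le {A} (l : list A) f g : (forall x, In x l -> f x <= g x) -> lsum l f <= lsum l g.
Proof. induction l; simpl; intros H. lra. pose proof (H a (or_introl eq_refl)).
  assert (lsum l f <= lsum l g) by (apply IHl; auto). lra. Qed.
Lemma lsum_nonneg {A} (l : list A) f : (forall x, In x l -> 0 <= f x) -> 0 <= lsum l f.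
Proof. induction l; simpl; intros H. lra. pose proof (H a (or_introl eq_refl)).
  assert (0 <= lsum l f) by (apply IHl; auto). lra. Qed.
Lemma lsum_plus {A} (l : list A) f g : lsum l (fun x => f x + g x) = lsum l f + lsum l g.
Proof. induction l; simpl. lra. rewrite IHl. lra. Qed.
Lemma lsum_scal {A} (l : list A) c f : lsum l (fun x => c * f x) = c * lsum l f.
Proof. induction l; simpl. lra. rewrite IHl. lra. Qed.
Lemma lsum_zero {A} (l : list A) : lsum l (fun _ => 0) = 0.
Proof. induction l; simpl; auto. rewrite IHl; lra. Qed.
Lemma lsum_swap {A B} (l1 : list A) (l2 : list B) F :
  lsum l1 (fun x => lsum l2 (F x)) = lsum l2 (fun y => lsum l1 (fun x => F x y)).
Proof. induction l1; simpl. symmetry; apply lsum_zero.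
  rewrite IHl1. rewrite <- lsum_plus. reflexivity. Qed.
Lemma lsum_pos_ex {A} (l : list A) f : 0 < lsum l f -> exists x, In x l /\ f x <> 0.
Proof. induction l; simpl; intros H. lra.
  destruct (Req_dec (f a) 0). destruct IHl as [x [? ?]]. lra. eauto. eauto. Qed.
Lemma lsum_pos {A} (l : list A) f x : (forall y, In y l -> 0 <= f y) -> In x l -> 0 < f x ->
  0 < lsum l f.
Proof. induction l; simpl; intros H Hx Hf. destruct Hx.
  destruct Hx as [->|Hx].
  - assert (0 <= lsum l f) by (apply lsum_nonneg; auto). lra.
  - assert (0 < lsum l f) by (apply IHl; auto). pose proof (H a (or_introl eq_refl)). lra. Qed.

Lemma ell_eq {X} (S : list (X -> Prop)) rho g :
  ell S rho g = lsum S (fun s => if excluded_middle_informative (meets s g) then rho s else 0).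
Proof. reflexivity. Qed.
Lemma Vp_eq {X} p (S : list (X -> Prop)) rho : Vp p S rho = lsum S (fun s => rpow (rho s) p).
Proof. reflexivity. Qed.

Lemma ell_mono {X} (S : list (X -> Prop)) r1 r2 g :
  (forall s, In s S -> meets s g -> r1 s <= r2 s) -> ell S r1 g <= ell S r2 g.
Proof. intros H. rewrite !ell_eq. apply lsum_le. intros s Hs.
  destruct (excluded_middle_informative _); auto. lra. Qed.
Lemma ell_nonneg {X} (S : list (X -> Prop)) r g : (forall s, In s S -> 0 <= r s) -> 0 <= ell S r g.
Proof. intros H. rewrite ell_eq. apply lsum_nonneg. intros s Hs.
  destruct (excluded_middle_informative _); auto. lra. Qed.
Lemma lsum_ext {A} (l : list A) f g : (forall x, In x l -> f x = g x) -> lsum l f = lsum l g.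
Proof. intros H. apply Rle_antisym; apply lsum_le; intros x Hx; rewrite H; auto; lra. Qed.
Lemma ell_div {X} (S : list (X -> Prop)) r L g : ell S (fun s => r s / L) g = ell S r g / L.
Proof. rewrite !ell_eq. induction S; simpl. unfold Rdiv; lra.
  rewrite IHS. destruct (excluded_middle_informative _); unfold Rdiv; lra. Qed.
Lemma Vp_div {X} p (S : list (X -> Prop)) r L : (forall s, In s S -> 0 <= r s) -> 0 < L ->
  Vp p S (fun s => r s / L) = Vp p S r / rpow L p.
Proof. intros H HL. rewrite !Vp_eq.
  rewrite (lsum_ext _ _ (fun s => / rpow L p * rpow (r s) p)).
  rewrite lsum_scal. unfold Rdiv; lra.
  intros s Hs. rewrite rpow_div by auto. unfold Rdiv; lra. Qed.
Definition modset {X} (q : R) (G : (R -> X) -> Prop) (S : list (X -> Prop)) (v : R) : Prop :=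
  exists rho, admissible q S rho /\ 0 < Lrho G S rho /\ v = Vp q S rho / rpow (Lrho G S rho) q.

Lemma modulus_eq {X} q (G : (R -> X) -> Prop) S : (exists g, G g) -> modulus q G S = Rinf (modset q G S).
Proof. intros H. unfold modulus. destruct (excluded_middle_informative _); [reflexivity|contradiction]. Qed.

Lemma modset_lb {X} q (G : (R -> X) -> Prop) S v : modset q G S v -> 0 <= v.
Proof. intros [rho [[H1 H2] [H3 ->]]]. pose proof (rpow_pos' _ q H3).
  apply Rmult_le_pos; [lra|]. left; apply Rinv_0_lt_compat; auto. Qed.

Lemma ell_ge_single {X} (S : list (X -> Prop)) rho g s : In s S -> meets s g ->
  (forall s, In s S -> 0 <= rho s) -> rho s <= ell S rho g.
Proof. intros Hs Hm H. rewrite ell_eq. induction S as [|a S IH]; simpl. destruct Hs.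
  destruct Hs as [->|Hs].
  - destruct (excluded_middle_informative _); [|contradiction].
    assert (0 <= lsum S (fun s0 => if excluded_middle_informative (meets s0 g) then rho s0 else 0)).
    { apply lsum_nonneg. intros x Hx. destruct (excluded_middle_informative _); [apply H; simpl; auto|lra]. }
    lra.
  - assert (0 <= (if excluded_middle_informative (meets a g) then rho a else 0)).
    { destruct (excluded_middle_informative _); [apply H; simpl; auto|lra]. }
    assert (rho s <= lsum S (fun s0 => if excluded_middle_informative (meets s0 g) then rho s0 else 0)).
    { apply IH; auto. intros; apply H; simpl; auto. }
    lra.
Qed.

Lemma Lrho_glb {X} (G : (R -> X) -> Prop) S rho g : (forall s, In s S -> 0 <= rho s) -> G g ->
  Lrho G S rho <= ell S rho g.
Proof. intros H Hg. unfold Lrho. apply (Rinf_le _ _ 0). eauto.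
  intros y [g' [_ ->]]. apply ell_nonneg; auto. Qed.

Lemma Lrho_ge {X} (G : (R -> X) -> Prop) S rho b : (exists g, G g) ->
  (forall g, G g -> b <= ell S rho g) -> b <= Lrho G S rho.
Proof. intros [g Hg] H. unfold Lrho. apply (Rinf_ge _ (ell S rho g)). eauto.
  intros y [g' [Hg' ->]]. auto. Qed.

Definition covers {X} (S : list (X -> Prop)) := forall x : X, exists s, In s S /\ s x.

Lemma meets_some {X} (S : list (X -> Prop)) g : covers S -> exists s, In s S /\ meets s g.
Proof. intros H. destruct (H (g 0)) as [s [Hs Hx]]. exists s. split; auto. exists 0. split; [lra|auto]. Qed.

Lemma modset_nonempty {X} q (G : (R -> X) -> Prop) S : (exists g, G g) -> covers S ->
  exists v, modset q G S v.
Proof.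
  intros [g Hg] Hc.
  assert (HL : 1 <= Lrho G S (fun _ => 1)).
  { apply Lrho_ge; eauto. intros g' _. destruct (meets_some S g' Hc) as [s [Hs Hm]].
    apply (ell_ge_single S (fun _ => 1) g' s); auto. intros; lra. }
  eexists. exists (fun _ => 1). split; [|split; [lra|reflexivity]].
  split. intros; lra. destruct (meets_some S g Hc) as [s [Hs _]].
  rewrite Vp_eq. apply (lsum_pos _ _ s); auto. intros; apply rpow_nonneg.
  rewrite rpow_one; lra.
Qed.

Lemma metric_from_mod {X} q (G : (R -> X) -> Prop) S c : (exists g, G g) -> covers S ->
  modulus q G S < c -> exists sig, (forall s, In s S -> 0 <= sig s) /\ Vp q S sig < c /\
   forall g, G g -> 1 <= ell S sig g.
Proof.
  intros HG Hc Hm. rewrite modulus_eq in Hm by auto.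
  destruct (modset_nonempty q G S HG Hc) as [v0 Hv0].
  destruct (Rinf_lt _ v0 0 c Hv0 (modset_lb q G S) Hm) as [v [[rho [[H1 H2] [H3 ->]]] Hlt]].
  set (L := Lrho G S rho) in *.
  exists (fun s => rho s / L). split; [|split].
  - intros s Hs. unfold Rdiv; apply Rmult_le_pos; auto; left; apply Rinv_0_lt_compat; auto.
  - rewrite Vp_div; auto.
  - intros g Hg. rewrite ell_div. pose proof (Lrho_glb G S rho g H1 Hg). fold L in H.
    apply (Rmult_le_reg_r L); auto. unfold Rdiv. rewrite Rmult_assoc, Rinv_l by lra. lra.
Qed.
Lemma per_x_ineq r t p q eta : 0 <= r -> 0 < t -> 1 <= p -> p < q -> 0 < eta ->
  rpow (if Rle_dec r t then r else 0) q + (if Rlt_dec t r then 2 * eta else 0)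
  <= (Rpower t (q - p) + 2 * eta / Rpower t p) * rpow r p.
Proof.
  intros Hr Ht Hp Hpq He.
  assert (HT : 0 < Rpower t p) by (unfold Rpower; apply exp_pos).
  assert (HT2 : 0 < Rpower t (q - p)) by (unfold Rpower; apply exp_pos).
  assert (Hc : 0 <= 2 * eta / Rpower t p) by (unfold Rdiv; apply Rmult_le_pos; [lra|left; apply Rinv_0_lt_compat; auto]).
  destruct (Rle_dec r t) as [Hle|Hle]; destruct (Rlt_dec t r) as [Hlt|Hlt]; try lra.
  - destruct (Req_dec r 0) as [->|Hr0].
    + rewrite !rpow_0. lra.
    + assert (0 < r) by lra. rewrite !rpow_pos by auto.
      replace q with ((q - p) + p) at 1 by ring. rewrite Rpower_plus.
      assert (Rpower r (q - p) <= Rpower t (q - p)) by (apply Rle_Rpower_l; lra).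
      assert (0 < Rpower r p) by (unfold Rpower; apply exp_pos).
      nra.
  - rewrite rpow_0, rpow_pos by lra.
    assert (Rpower t p <= Rpower r p) by (apply Rle_Rpower_l; lra).
    assert (2 * eta / Rpower t p * Rpower r p >= 2 * eta).
    { unfold Rdiv. replace (2 * eta) with (2 * eta * / Rpower t p * Rpower t p) at 2
        by (field; lra). pose proof (Rinv_0_lt_compat _ HT). nra. }
    nra.
Qed.

Lemma fmax_ge {A} (l : list A) f s : In s l -> f s <= fold_right (fun s acc => Rmax (f s) acc) 0 l.
Proof. induction l as [|s0 l IH]; simpl; intros H. destruct H.
  destruct H as [->|H]. apply Rmax_l. eapply Rle_trans; [apply IH; auto|apply Rmax_r]. Qed.
Lemma fmax_bound {A} (l : list A) f q : (forall s, In s l -> 0 <= f s) ->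
  0 <= fold_right (fun s acc => Rmax (f s) acc) 0 l /\
  rpow (fold_right (fun s acc => Rmax (f s) acc) 0 l) q <= lsum l (fun s => rpow (f s) q).
Proof. intros Hb. induction l as [|s0 l IH]; simpl. rewrite rpow_0; lra.
  destruct IH as [IH1 IH2]. intros; apply Hb; simpl; auto.
  assert (0 <= f s0) by (apply Hb; simpl; auto).
  split. eapply Rle_trans; [apply IH1|apply Rmax_r].
  pose proof (rpow_max (f s0) (fold_right (fun s acc => Rmax (f s) acc) 0 l) q H IH1). lra.
Qed.

Section Core.
Context {X : Type} (Gam : (R -> X) -> Prop) (S : list (X -> Prop)) (p q t eta : R)
  (Ht : 0 < t) (Hp : 1 <= p) (Hpq : p < q) (He : 0 < eta) (HG : exists g, Gam g)
  (Hc : covers S)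
  (r : (X -> Prop) -> R) (Hr : forall s, In s S -> 0 <= r s)
  (Hr1 : forall g, Gam g -> 1 <= ell S r g)
  (sig : (X -> Prop) -> (X -> Prop) -> R)
  (Hs1 : forall s x, In s S -> In x S -> 0 <= sig s x)
  (Hs2 : forall s, In s S -> Vp q S (sig s) <= 2 * eta)
  (Hs3 : forall s g, In s S -> Gam g -> meets s g -> 1 <= ell S (sig s) g).

Let b s x := if Rlt_dec t (r s) then sig s x else 0.
Let a x := if Rle_dec (r x) t then r x else 0.
Let M x := fold_right (fun s acc => Rmax (b s x) acc) 0 S.
Let tau x := Rmax (a x) (M x).

Lemma b_nonneg s x : In s S -> In x S -> 0 <= b s x.
Proof. intros. unfold b. destruct (Rlt_dec _ _); [apply Hs1; auto|lra]. Qed.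
Lemma a_nonneg x : In x S -> 0 <= a x.
Proof. intros. unfold a. destruct (Rle_dec _ _); [apply Hr; auto|lra]. Qed.

Lemma M_ge x s : In s S -> b s x <= M x.
Proof. intros. apply (fmax_ge S (fun s => b s x)); auto. Qed.
Lemma M_bound x : In x S -> 0 <= M x /\ rpow (M x) q <= lsum S (fun s => rpow (b s x) q).
Proof. intros. apply (fmax_bound S (fun s => b s x)). intros; apply b_nonneg; auto. Qed.

Lemma tau_nonneg x : In x S -> 0 <= tau x.
Proof. intros. unfold tau. apply Rle_trans with (a x); [apply a_nonneg; auto|apply Rmax_l]. Qed.

Lemma tau_ell g : Gam g -> 1 <= ell S tau g.
Proof.
  intros Hg. destruct (classic (exists s, In s S /\ meets s g /\ t < r s)) as [[s [Hs [Hm Hlt]]]|Hn].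
  - eapply Rle_trans; [apply (Hs3 s g Hs Hg Hm)|]. apply ell_mono. intros x Hx _.
    unfold tau. eapply Rle_trans; [|apply Rmax_r]. eapply Rle_trans; [|apply (M_ge x s Hs)].
    unfold b. destruct (Rlt_dec _ _); [lra|contradiction].
  - eapply Rle_trans; [apply (Hr1 g Hg)|]. apply ell_mono. intros x Hx Hm.
    unfold tau. eapply Rle_trans; [|apply Rmax_l]. unfold a.
    destruct (Rle_dec _ _) as [|Hn2]; [lra|]. exfalso. apply Hn. exists x. repeat split; auto. lra.
Qed.

Lemma tau_Vp : Vp q S tau <= (Rpower t (q - p) + 2 * eta / Rpower t p) * Vp p S r.
Proof.
  rewrite !Vp_eq.
  apply Rle_trans with (lsum S (fun x => rpow (a x) q + lsum S (fun s => rpow (b s x) q))).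
  { apply lsum_le. intros x Hx. unfold tau.
    pose proof (rpow_max (a x) (M x) q (a_nonneg x Hx) (proj1 (M_bound x Hx))).
    pose proof (proj2 (M_bound x Hx)). lra. }
  rewrite lsum_plus, lsum_swap.
  apply Rle_trans with (lsum S (fun x => rpow (a x) q + (if Rlt_dec t (r x) then 2 * eta else 0))).
  { rewrite lsum_plus. apply Rplus_le_compat_l. apply lsum_le. intros s Hs.
    unfold b. destruct (Rlt_dec _ _). apply Hs2; auto.
    rewrite (lsum_ext _ _ (fun _ => 0)). rewrite lsum_zero; lra. intros; apply rpow_0. }
  rewrite <- lsum_scal. apply lsum_le. intros x Hx. unfold a. apply per_x_ineq; auto.
Qed.

Lemma core : modulus q Gam S <= (Rpower t (q - p) + 2 * eta / Rpower t p) * Vp p S r.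
Proof.
  assert (HL : 1 <= Lrho Gam S tau) by (apply Lrho_ge; auto; apply tau_ell).
  assert (HV : 0 < Vp q S tau).
  { destruct HG as [g Hg]. pose proof (tau_ell g Hg). rewrite ell_eq in H.
    assert (H0 : 0 < lsum S (fun s => if excluded_middle_informative (meets s g) then tau s else 0)) by lra.
    destruct (lsum_pos_ex S _ H0) as [x [Hx Hne]].
    destruct (excluded_middle_informative _); [|lra].
    pose proof (tau_nonneg x Hx). rewrite Vp_eq. apply (lsum_pos _ _ x); auto.
    intros; apply rpow_nonneg. apply rpow_pos'; lra. }
  rewrite modulus_eq by auto.
  eapply Rle_trans; [|apply tau_Vp].
  pose proof (rpow_ge1 _ q HL ltac:(lra)).
  apply Rle_trans with (Vp q S tau / rpow (Lrho Gam S tau) q).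
  - apply (Rinf_le _ _ 0). exists tau. split; [split|split]; auto; [apply tau_nonneg|lra].
    apply modset_lb.
  - unfold Rdiv. assert (0 < / rpow (Lrho Gam S tau) q <= 1).
    { split. apply Rinv_0_lt_compat; lra. rewrite <- Rinv_1. apply Rinv_le_contravar; lra. }
    nra.
Qed.
End Core.
Lemma modulus_nonneg {X} q (G : (R -> X) -> Prop) S : (exists g, G g) -> covers S -> 0 <= modulus q G S.
Proof. intros HG Hc. rewrite modulus_eq by auto. destruct (modset_nonempty q G S HG Hc) as [v Hv].
  apply (Rinf_ge _ v); auto. apply modset_lb. Qed.

Lemma main_bound {X} (Gam : (R -> X) -> Prop) S p q t eta :
  0 < t -> 1 <= p -> p < q -> 0 < eta -> (exists g, Gam g) -> covers S ->
  (forall s, In s S -> modulus q (Gam_at Gam s) S <= eta) ->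
  modulus q Gam S <= (Rpower t (q - p) + 2 * eta / Rpower t p) * modulus p Gam S.
Proof.
  intros Ht Hp Hpq He HG Hc Hsup.
  set (c := Rpower t (q - p) + 2 * eta / Rpower t p).
  assert (Hcpos : 0 < c).
  { unfold c. assert (0 < Rpower t (q - p)) by (unfold Rpower; apply exp_pos).
    assert (0 < Rpower t p) by (unfold Rpower; apply exp_pos).
    assert (0 < 2 * eta / Rpower t p) by (unfold Rdiv; apply Rmult_lt_0_compat; [lra|apply Rinv_0_lt_compat; auto]).
    lra. }
  assert (Hex : forall s, exists sg : (X -> Prop) -> R, In s S ->
     (forall x, In x S -> 0 <= sg x) /\ Vp q S sg <= 2 * eta /\
     forall g, Gam g -> meets s g -> 1 <= ell S sg g).
  { intros s. destruct (classic (In s S)) as [Hs|Hs]; [|exists (fun _ => 0); tauto].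
    destruct (classic (exists g, Gam_at Gam s g)) as [Hne|Hne].
    - destruct (metric_from_mod q (Gam_at Gam s) S (2 * eta) Hne Hc) as [sg [H1 [H2 H3]]].
      pose proof (Hsup s Hs). lra.
      exists sg. intros _. split; [auto|split; [lra|]]. intros g Hg Hm. apply H3. split; auto.
    - exists (fun _ => 0). intros _. split; [intros; lra|split].
      + rewrite Vp_eq, (lsum_ext _ _ (fun _ => 0)). rewrite lsum_zero; lra. intros; apply rpow_0.
      + intros g Hg Hm. exfalso. apply Hne. exists g. split; auto. }
  set (sig := fun s => proj1_sig (constructive_indefinite_description _ (Hex s))).
  assert (Hsig : forall s, In s S -> (forall x, In x S -> 0 <= sig s x) /\ Vp q S (sig s) <= 2 * eta /\
     forall g, Gam g -> meets s g -> 1 <= ell S (sig s) g).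
  { intros s Hs. unfold sig. destruct (constructive_indefinite_description _ (Hex s)) as [sg Hsg]. simpl. auto. }
  assert (modulus q Gam S / c <= modulus p Gam S).
  { rewrite (modulus_eq p) by auto. destruct (modset_nonempty p Gam S HG Hc) as [v0 Hv0].
    apply (Rinf_ge _ v0); auto. intros v [rho [[H1 H2] [H3 ->]]].
    set (L := Lrho Gam S rho) in *.
    assert (Hcore := core Gam S p q t eta Ht Hp Hpq He HG (fun s => rho s / L)
      ltac:(intros s Hs; unfold Rdiv; apply Rmult_le_pos; [auto|left; apply Rinv_0_lt_compat; auto])
      ltac:(intros g Hg; rewrite ell_div; pose proof (Lrho_glb Gam S rho g H1 Hg) as HH; fold L in HH;
            apply (Rmult_le_reg_r L); auto; unfold Rdiv; rewrite Rmult_assoc, Rinv_l by lra; lra)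
      sig
      ltac:(intros s x Hs Hx; apply (Hsig s Hs); auto)
      ltac:(intros s Hs; apply (Hsig s Hs))
      ltac:(intros s g Hs; apply (Hsig s Hs))).
    rewrite Vp_div in Hcore by auto. fold c in Hcore.
    apply (Rmult_le_reg_r c); auto. unfold Rdiv at 1. rewrite Rmult_assoc, Rinv_l by lra. lra. }
  apply (Rmult_le_compat_l c) in H; [|lra].
  unfold Rdiv in H. rewrite <- Rmult_assoc, (Rmult_comm c), Rmult_assoc, Rinv_r, Rmult_1_r in H by lra.
  exact H.
Qed.

Theorem corollary4p10 (X : Type) (T : topology X) (Gam : (R -> X) -> Prop)
  (HGam : forall g, Gam g -> is_curve T g) (HGne : exists g, Gam g)
  (S : nat -> list (X -> Prop)) (HS : forall n, finite_cover (S n))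
  (p q : R) (Hp : 1 <= p) (Hpq : p < q)
  (eta : nat -> R) (Heta_pos : forall n, 0 < eta n) (Heta_lim : Un_cv eta 0)
  (Hsup : forall n, forall s, In s (S n) -> modulus q (Gam_at Gam s) (S n) <= eta n) :
  Un_cv (fun n => modulus q Gam (S n) / modulus p Gam (S n)) 0.
Proof.
  intros eps Heps.
  set (t := Rpower (eps / 2) (/ (q - p))).
  assert (Ht : 0 < t) by (unfold t, Rpower; apply exp_pos).
  assert (Htq : Rpower t (q - p) = eps / 2).
  { unfold t. rewrite Rpower_mult, Rinv_l by lra. apply Rpower_1. lra. }
  set (TT := Rpower t p).
  assert (HT : 0 < TT) by (unfold TT, Rpower; apply exp_pos).
  destruct (Heta_lim (eps * TT / 4)) as [N HN].
  { unfold Rdiv. apply Rmult_lt_0_compat; [apply Rmult_lt_0_compat; auto|lra]. }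
  exists N. intros n Hn. specialize (HN n Hn). unfold R_dist in *.
  rewrite Rminus_0_r in *. pose proof (Heta_pos n).
  rewrite Rabs_right in HN by lra.
  assert (Hcov : covers (S n)) by (exact (proj2 (HS n))).
  pose proof (main_bound Gam (S n) p q t (eta n) Ht Hp Hpq H HGne Hcov (Hsup n)) as Hb.
  rewrite Htq in Hb. fold TT in Hb.
  assert (Hc2 : eps / 2 + 2 * eta n / TT < eps).
  { assert (2 * eta n / TT < eps / 2).
    { apply (Rmult_lt_reg_r TT); auto. unfold Rdiv. rewrite Rmult_assoc, Rinv_l by lra. nra. }
    lra. }
  pose proof (modulus_nonneg q Gam (S n) HGne Hcov).
  pose proof (modulus_nonneg p Gam (S n) HGne Hcov).
  destruct (Req_dec (modulus p Gam (S n)) 0) as [E|E].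
  - rewrite E. unfold Rdiv. rewrite Rinv_0, Rmult_0_r, Rabs_R0. lra.
  - assert (0 < / modulus p Gam (S n)) by (apply Rinv_0_lt_compat; lra).
    assert (Hr : modulus q Gam (S n) / modulus p Gam (S n) <= eps / 2 + 2 * eta n / TT).
    { apply (Rmult_le_reg_r (modulus p Gam (S n))); [lra|]. unfold Rdiv at 1.
      rewrite Rmult_assoc, Rinv_l by lra. lra. }
    rewrite Rabs_right. lra. apply Rle_ge. unfold Rdiv. apply Rmult_le_pos; lra.
Qed.
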